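(* For $n \in \mathbb{N}_0$ let $\lambda(n)$ denote the number of leading $1$s in the binary expansion of $n$ (so $\lambda(0)=0$, and e.g. $\lambda(123)=\lambda([1111011]_2)=4$). Define $f\colon\mathbb{N}_0\to\{0,1\}$ by $f(n)=1$ if $\lambda(n)$ is prime and $f(n)=0$ otherwise. Then $f$ is asymptotically $2$-automatic but there is no $2$-automatic sequence $\tilde f\colon\mathbb{N}_0\to\{0,1\}$ with $f\simeq\tilde f$.
   Context: $\mathbb{N}_0=\{0,1,2,\dots\}$. A property holds for almost all $n\in\mathbb{N}_0$ if the set of $n$ where it fails has upper density $\limsup_{N\to\infty}|\cdot\cap\{0,\dots,N-1\}|/N$ equal to $0$. Sequences $f,g$ are asymptotically equal, $f\simeq g$, if $f(n)=g(n)$ for almost all $n$. The $k$-kernel of $f$ is $\mathcal{N}_k(f) = \{ n \mapsto f(k^\alpha n + r) : \alpha, r \in \mathbb{N}_0,\ r < k^\alpha\}$; $f$ is $k$-automatic if $\mathcal{N}_k(f)$ is finite, and asymptotically $k$-automatic if $\mathcal{N}_k(f)/{\simeq}$ is finite. *)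

(* Defs.v *)
From Stdlib Require List.
From mathcomp Require Import all_boot all_order all_algebra.
Set Implicit Arguments. Unset Strict Implicit. Unset Printing Implicit Defensive.
Import Order.TTheory GRing.Theory Num.Theory.

Definition upper_density_zero (S : pred nat) : Prop :=
  forall eps : rat, (0 < eps)%R ->
    exists N0 : nat, forall N : nat, (N0 <= N)%N ->
      ((count S (iota 0 N))%:R <= eps * N%:R)%R.

Definition asym_eq (T : eqType) (f g : nat -> T) : Prop :=
  upper_density_zero (fun n => f n != g n).

Definition in_kernel (T : Type) (k : nat) (f h : nat -> T) : Prop :=
  exists alpha r : nat, (r < k ^ alpha)%N /\ h = (fun n => f (k ^ alpha * n + r)).

(* N_k(f) is finite: listed (up to duplication) by a finite list. *)
Definition automatic (T : Type) (k : nat) (f : nat -> T) : Prop :=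
  exists s : seq (nat -> T),
    (forall h, List.In h s -> in_kernel k f h) /\
    (forall h, in_kernel k f h -> List.In h s).

(* N_k(f)/≃ is finite: finitely many kernel elements represent every
   ≃-class of the kernel. *)
Definition asym_automatic (T : eqType) (k : nat) (f : nat -> T) : Prop :=
  exists s : seq (nat -> T),
    (forall h, List.In h s -> in_kernel k f h) /\
    (forall h, in_kernel k f h -> exists2 g, List.In g s & asym_eq h g).

(* binary digits, least significant first (fuel-based; fuel n suffices) *)
Fixpoint bits_aux (fuel n : nat) : seq bool :=
  match fuel with
  | 0 => [::]
  | fuel'.+1 => if n is 0 then [::] else odd n :: bits_aux fuel' n./2
  end.

Definition binary (n : nat) : seq bool := rev (bits_aux n n).

Definition lead_ones (n : nat) : nat := find negb (binary n).

Definition f_prime_lead (n : nat) : nat := if prime (lead_ones n) then 1 else 0.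

(* Main.v *)
Require Import Defs.
From mathcomp Require Import all_boot all_order all_algebra.
From mathcomp Require Import zify.
From Stdlib Require Import ClassicalEpsilon FunctionalExtensionality.
Set Implicit Arguments. Unset Strict Implicit. Unset Printing Implicit Defensive.

Lemma halfS_le n : n.+1./2 <= n.
Proof. rewrite leq_half_double -addnn; lia. Qed.

Lemma bits_aux_fuel f1 f2 n : n <= f1 -> n <= f2 -> bits_aux f1 n = bits_aux f2 n.
Proof.
elim: f1 f2 n => [|f1 IH] [|f2] [|n] //= h1 h2.
congr (_ :: _); apply: IH.
- exact: leq_trans (halfS_le n) h1.
- exact: leq_trans (halfS_le n) h2.
Qed.

Lemma bits_aux_pos f m : 0 < m -> bits_aux f.+1 m = odd m :: bits_aux f m./2.
Proof. by case: m. Qed.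

Lemma binary_double n (b : bool) : 0 < n -> binary (n.*2 + b) = rcons (binary n) b.
Proof.
move=> n0; rewrite /binary.
have -> : n.*2 + b = (n.*2 + b).-1.+1 by rewrite -addnn; lia.
rewrite bits_aux_pos; last by [].
have -> : (n.*2 + b).-1.+1 = b + n.*2 by rewrite -addnn; lia.
rewrite oddD odd_double addbF half_bit_double.
rewrite rev_cons; congr (rcons (rev _) _).
apply: bits_aux_fuel => //; rewrite -addnn; lia.
by case: b.
Qed.

Lemma binary0 : binary 0 = [::]. Proof. by []. Qed.
Lemma binary1 : binary 1 = [:: true]. Proof. by []. Qed.

Lemma binary_shift a n r : 0 < n -> r < 2 ^ a ->
  exists t, binary (2 ^ a * n + r) = binary n ++ t.
Proof.
move=> n0; elim: a r => [|a IH] r hr.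
  by exists [::]; move: hr; rewrite expn0 ltnS leqn0 => /eqP ->; rewrite mul1n addn0 cats0.
have hr' : r./2 < 2 ^ a by rewrite ltn_half_double -muln2 -expnSr.
have [t ht] := IH _ hr'.
exists (rcons t (odd r)).
have -> : 2 ^ a.+1 * n + r = (2 ^ a * n + r./2).*2 + odd r.
  by rewrite -{3}(odd_double_half r) expnS doubleD -mul2n mulnA; lia.
have : 0 < 2 ^ a * n by rewrite muln_gt0 expn_gt0 n0.
move=> h; rewrite binary_double ?ht ?rcons_cat //; lia.
Qed.

Lemma nseqSr (T : Type) y (x : T) : nseq y.+1 x = rcons (nseq y x) x.
Proof. by elim: y => //= y <-. Qed.

Lemma binary_ones y : binary (2 ^ y - 1) = nseq y true.
Proof.
elim: y => [|y IH]; first by [].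
case: y IH => [|y] IH; first by [].
have h : 0 < 2 ^ y.+1 - 1 by have := ltn_expl y.+1 (ltnSn 1); lia.
have -> : 2 ^ y.+2 - 1 = (2 ^ y.+1 - 1).*2 + true.
  by rewrite (expnS 2 y.+1) -addnn; lia.
by rewrite binary_double // IH -nseqSr.
Qed.

Lemma all_ones n : all id (binary n) -> n = 2 ^ size (binary n) - 1.
Proof.
elim/ltn_ind: n => n IH.
case: n IH => [|n] IH; first by [].
case: n IH => [|n] IH; first by [].
have e : n.+2 = (n.+2)./2.*2 + odd n.+2 by rewrite addnC odd_double_half.
have h0 : 0 < (n.+2)./2 by [].
rewrite e binary_double // all_rcons size_rcons => /andP [ho ha].
have hk := IH (n.+2)./2 (halfS_le n.+1) ha.
move: ho; case: (odd n.+2) => // _.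
move: hk; set k := size _ => hk.
rewrite {1}hk expnS -addnn. have := ltn_expl k (ltnSn 1). lia.
Qed.

Lemma lead_shift a n r : has negb (binary n) -> r < 2 ^ a ->
  lead_ones (2 ^ a * n + r) = lead_ones n.
Proof.
move=> hn hr; have n0 : 0 < n by case: n hn.
have [t ht] := binary_shift n0 hr.
by rewrite /lead_ones ht find_cat hn.
Qed.

Lemma lead_special a y r : 0 < y -> r < 2 ^ a ->
  lead_ones (2 ^ a * (2 ^ y.+1 - 2) + r) = y.
Proof.
move=> y0 hr.
have e : 2 ^ y.+1 - 2 = (2 ^ y - 1).*2 + false.
  by rewrite expnS -addnn /=; have := ltn_expl y (ltnSn 1); lia.
have p0 : 0 < 2 ^ y - 1 by have := ltn_expl y (ltnSn 1); case: (y) y0 => // y' _; rewrite expnS; lia.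
have p1 : 0 < 2 ^ y.+1 - 2 by rewrite e; rewrite -addnn; lia.
have [t ht] := binary_shift p1 hr.
rewrite /lead_ones ht e binary_double // binary_ones -cats1 -catA find_cat.
by rewrite has_nseq andbF size_nseq addn0.
Qed.

Lemma count_ones N : count (fun n => all id (binary n)) (iota 0 N) <= (trunc_log 2 N).+1.
Proof.
rewrite -size_filter.
have -> : (trunc_log 2 N).+1 = size [seq 2 ^ k - 1 | k <- iota 0 (trunc_log 2 N).+1].
  by rewrite size_map size_iota.
apply: uniq_leq_size; first exact: filter_uniq (iota_uniq 0 N).
move=> x; rewrite mem_filter mem_iota add0n => /andP [hx hN].
apply/mapP; exists (size (binary x)); last exact: all_ones.
rewrite mem_iota add0n ltnS.
apply: trunc_log_max => //.
move: hN; rewrite {2}(all_ones hx); have := ltn_expl (size (binary x)) (ltnSn 1); lia.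
Qed.

Lemma lin_exp v : 3 <= v -> (2 * v).+1 <= 2 ^ v.
Proof.
elim: v => [|v IH] // hv.
have [h|h] := leqP 3 v.
- have := IH h; rewrite expnS; lia.
- have -> : v = 2 by lia.
  by [].
Qed.

Lemma exp_dom M : exists T0, forall t, T0 <= t -> M * t.+1 <= 2 ^ t.
Proof.
set T0 := 2 * (M + 3).
have base : M * T0.+1 <= 2 ^ T0.
  have -> : 2 ^ T0 = 2 ^ (M + 3) * 2 ^ (M + 3) by rewrite /T0 mul2n -addnn expnD.
  apply: leq_mul; last by apply: lin_exp; lia.
  have := ltn_expl (M + 3) (ltnSn 1); lia.
exists T0; elim => [|t IH] ht.
- have e : T0 = 0 by lia.
  by move: base; rewrite e.
- have [h|h] := leqP T0 t.
  + have := IH h; rewrite expnS; lia.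
  + have -> : t.+1 = T0 by lia.
    exact: base.
Qed.

Import Order.TTheory GRing.Theory Num.Theory.

Lemma eps_bound (eps : rat) : (0 < eps)%R -> exists M : nat, (1 <= eps * M%:R)%R.
Proof.
move=> e0; exists (Num.Def.archi_bound (eps^-1)).
have h : (eps^-1 < (Num.Def.archi_bound (eps^-1))%:R)%R.
  by apply: archi_boundP; rewrite invr_ge0 ltW.
rewrite -(ltr_pM2l e0) mulfV ?lt0r_neq0 // in h.
exact: ltW.
Qed.

Lemma sparse_density (S : pred nat) :
  (forall N, count S (iota 0 N) <= (trunc_log 2 N).+1) -> upper_density_zero S.
Proof.
move=> hS eps e0.
have [M hM] := eps_bound e0.
have [T0 hT] := exp_dom M.
exists (2 ^ T0) => N hN.
have N0 : 0 < N by apply: leq_trans hN; rewrite expn_gt0.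
have tT : T0 <= trunc_log 2 N := trunc_log_max (ltnSn 1) hN.
have tN : 2 ^ trunc_log 2 N <= N := trunc_logP (ltnSn 1) N0.
have key : M * (trunc_log 2 N).+1 <= N := leq_trans (hT _ tT) tN.
apply: (@le_trans _ _ ((trunc_log 2 N).+1)%:R%R); first by rewrite ler_nat hS.
apply: (@le_trans _ _ (eps * M%:R * ((trunc_log 2 N).+1)%:R)%R).
  by rewrite -{1}(mul1r ((trunc_log 2 N).+1)%:R%R); apply: ler_wpM2r.
rewrite -mulrA -natrM; apply: ler_wpM2l; first exact: ltW.
by rewrite ler_nat.
Qed.

Lemma density_sub (S T : pred nat) : subpred S T -> upper_density_zero T -> upper_density_zero S.
Proof.
move=> sub hT eps e0; have [N0 h] := hT eps e0; exists N0 => N hN.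
apply: le_trans (h N hN); rewrite ler_nat; exact: sub_count.
Qed.

Lemma has_negb_binary n : ~~ all id (binary n) -> has negb (binary n).
Proof. by rewrite -has_predC. Qed.

Lemma part1 : asym_automatic 2 f_prime_lead.
Proof.
exists [:: f_prime_lead]; split.
- move=> h [<-|[]]; exists 0, 0; split => //.
  by apply: functional_extensionality => n; rewrite expn0 mul1n addn0.
- move=> h [a [r [hr ->]]]; exists f_prime_lead; first by left.
  apply: (density_sub _ (sparse_density count_ones)) => n /=.
  case E: (all id (binary n)) => //.
  have hn := has_negb_binary (negbT E).
  by rewrite /f_prime_lead lead_shift // eqxx.
Qed.

Lemma count_orb (T : Type) (p q : pred T) s :
  count (fun x => p x || q x) s <= count p s + count q s.
Proof. elim: s => //= x s IH; case: (p x); case: (q x) => /=; lia. Qed.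

Lemma count_shift (E : pred nat) c R Nb : c + R <= Nb ->
  count (fun r => E (c + r)) (iota 0 R) <= count E (iota 0 Nb).
Proof.
move=> h.
have -> : count (fun r => E (c + r)) (iota 0 R) = count E (iota c R).
  have -> : iota c R = iota (c + 0) R by rewrite addn0.
  by rewrite iotaDl count_map.
have -> : Nb = c + (R + (Nb - c - R)) by lia.
rewrite iotaD iotaD count_cat count_cat add0n; lia.
Qed.

Lemma union_bound (E : pred nat) (c : nat -> nat) R B Y :
  (forall y, y \in Y -> count (fun r => E (c y + r)) (iota 0 R) <= B) ->
  count (fun r => has (fun y => E (c y + r)) Y) (iota 0 R) <= size Y * B.
Proof.
elim: Y => [|y Y IH] hY /=; first by rewrite count_pred0.
apply: leq_trans (count_orb _ _ _) _.
rewrite mulSn; apply: leq_add; first by apply: hY; rewrite inE eqxx.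
by apply: IH => z hz; apply: hY; rewrite inE hz orbT.
Qed.

Lemma In_nth (X : Type) (d x : X) (s : seq X) :
  List.In x s -> exists k, k < size s /\ nth d s k = x.
Proof.
elim: s => [|y s IH] //= [->|h]; first by exists 0.
by have [k [hk e]] := IH h; exists k.+1.
Qed.

Lemma pigeon (X : Type) (s : seq X) (u : nat -> X) :
  (forall i, i <= size s -> List.In (u i) s) ->
  exists i j, i < j <= size s /\ u i = u j.
Proof.
move=> hu.
have H : forall i : 'I_(size s).+1, {k : 'I_(size s) | nth (u 0) s k = u i}.
  move=> i; apply: constructive_indefinite_description.
  have [k [hk e]] := In_nth (u 0) (hu i (ltn_ord i)).
  by exists (Ordinal hk).
pose idx i := sval (H i).
have : ~~ injectiveb idx.
  apply/negP => /injectiveP inj; have := leq_card _ inj; rewrite !card_ord; lia.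
move=> /injectivePn [x [y xy e]].
have exy : u x = u y by rewrite -(svalP (H x)) -(svalP (H y)) -/(idx x) -/(idx y) e.
have := ltn_ord x; have := ltn_ord y; rewrite !ltnS => hy hx.
case: (ltngtP x y) => [lt|lt|eq].
- by exists x, y; rewrite lt hy.
- by exists y, x; rewrite lt hx.
- by move: xy; rewrite -(inj_eq val_inj) /= eq eqxx.
Qed.

Lemma pow_eq a y : 2^a.+1 * (2^y - 1) = 2^a * (2^y.+1 - 2).
Proof. rewrite !expnS. nia. Qed.

Lemma not_prime_mul m d : prime m -> 0 < d -> ~~ prime (m * d.+1).
Proof.
move=> pm d0; apply/negP => /primeP [_ h].
have m1 := prime_gt1 pm.
case/orP: (h m (dvdn_mulr _ (dvdnn m))) => /eqP e; nia.
Qed.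

Lemma good_r (g : nat -> nat) L : asym_eq f_prime_lead g ->
  exists a r, r < 2 ^ a /\ forall y, 0 < y -> y <= L ->
    f_prime_lead (2 ^ a.+1 * (2 ^ y - 1) + r) = g (2 ^ a.+1 * (2 ^ y - 1) + r).
Proof.
move=> hfg.
set D := L.+1 * 2 ^ L.+2.
have D0 : 0 < D by rewrite muln_gt0 expn_gt0.
pose eps : rat := ((D%:R)^-1)%R.
have e0 : (0 < eps)%R by rewrite invr_gt0 ltr0n.
have [N0 hN0] := hfg eps e0.
set E := (fun n => f_prime_lead n != g n).
pose a := N0.
pose Nb := 2 ^ (a.+1 + L).
have hNb : N0 <= Nb.
  apply: leq_trans (ltnW (ltn_expl N0 (ltnSn 1))) _.
  by rewrite leq_pexp2l //; lia.
have hc := hN0 Nb hNb.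
set cE := count _ (iota 0 Nb) in hc.
have hcE : cE * D <= Nb.
  rewrite -(ler_nat rat) natrM.
  have D0r : (0 < D%:R :> rat)%R by rewrite ltr0n.
  have := ler_wpM2r (ltW D0r) hc ; rewrite /eps -mulrA (mulrC (Nb%:R)%R) mulrA mulVf ?mul1r //.
  by rewrite pnatr_eq0 -lt0n.
pose c y := 2 ^ a.+1 * (2 ^ y - 1).
have ub := @union_bound E c (2 ^ a) cE (iota 1 L).
have ub' : count (fun r => has (fun y => E (c y + r)) (iota 1 L)) (iota 0 (2 ^ a)) <= L * cE.
  rewrite -{2}(size_iota 1 L); apply: ub => y; rewrite mem_iota => /andP [y1 yL].
  apply: count_shift.
  have h1 : 2 ^ y <= 2 ^ L by rewrite leq_pexp2l //; lia.
  have h2 : 0 < 2 ^ y by rewrite expn_gt0.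
  have -> : Nb = 2 * 2 ^ a * 2 ^ L by rewrite /Nb expnD expnS.
  rewrite /c expnS.
  have := leq_mul (leqnn (2 * 2 ^ a)) h1. nia.
have lt : count (fun r => has (fun y => E (c y + r)) (iota 1 L)) (iota 0 (2 ^ a)) < 2 ^ a.
  apply: leq_ltn_trans ub' _.
  have e1 : Nb = 2 ^ a * 2 ^ L.+1 by rewrite /Nb addSnnS expnD.
  have e2 : D = (L.+1 * 2) * 2 ^ L.+1 by rewrite /D expnS; nia.
  move: hcE; rewrite e1 e2 mulnA leq_pmul2r ?expn_gt0 // => h.
  have : 0 < 2 ^ a by rewrite expn_gt0.
  nia.
have : has (predC (fun r => has (fun y => E (c y + r)) (iota 1 L))) (iota 0 (2 ^ a)).
  rewrite has_count; have := count_predC (fun r => has (fun y => E (c y + r)) (iota 1 L)) (iota 0 (2 ^ a)).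
  rewrite size_iota; lia.
move=> /hasP [r]; rewrite mem_iota add0n => /andP [_ hr] /= /hasPn nb.
exists a, r; split => // y y0 yL.
have := nb y; rewrite mem_iota y0 /= => /(_ (ltac:(lia))).
by rewrite /E negbK => /eqP.
Qed.

Lemma part2 : ~ (exists g : nat -> nat,
       (forall n, g n < 2) /\ automatic 2 g /\ asym_eq f_prime_lead g).
Proof.
move=> [g [_ [[s [sIn sK]] hfg]]].
have [m Km pm] := prime_above (size s).
have m1 := prime_gt1 pm.
pose L := m * (size s).+1.
have [a [r [hr good]]] := good_r L hfg.
pose h n := g (2 ^ a.+1 * n + r).
have hQ : forall y, 0 < y -> y <= L -> h (2 ^ y - 1) = if prime y then 1 else 0.
  move=> y y0 yL; rewrite /h -good // /f_prime_lead pow_eq lead_special //.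
pose u i := fun n => h (2 ^ i * n + (2 ^ i - 1)).
have uK : forall i, List.In (u i) s.
  move=> i; apply: sK; exists (a.+1 + i), (2 ^ a.+1 * (2 ^ i - 1) + r); split.
  - have : 0 < 2 ^ i by rewrite expn_gt0.
    have : r < 2 ^ a.+1 by rewrite expnS; lia.
    rewrite expnD; nia.
  - rewrite /u /h; apply: functional_extensionality => n; rewrite expnD; congr g; nia.
have [i [j [/andP [ij js] e]]] := pigeon (fun i (_ : i <= size s) => uK i).
have per : forall x, h (2 ^ (i + x) - 1) = h (2 ^ (j + x) - 1).
  move=> x; have := congr1 (fun F => F (2 ^ x - 1)) e; rewrite /u.
  have p1 : 0 < 2 ^ x by rewrite expn_gt0.
  have p2 : 0 < 2 ^ i by rewrite expn_gt0.
  have p3 : 0 < 2 ^ j by rewrite expn_gt0.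
  have -> : 2 ^ i * (2 ^ x - 1) + (2 ^ i - 1) = 2 ^ (i + x) - 1 by rewrite expnD; nia.
  have -> : 2 ^ j * (2 ^ x - 1) + (2 ^ j - 1) = 2 ^ (j + x) - 1 by rewrite expnD; nia.
  by [].
pose d := j - i.
have per2 : forall t x, h (2 ^ (i + x) - 1) = h (2 ^ (i + x + t * d) - 1).
  elim => [|t IH] x; first by rewrite mul0n addn0.
  rewrite IH -addnA per; congr (h (2 ^ _ - 1)); rewrite /d mulSn; lia.
have := per2 m (m - i).
have -> : i + (m - i) = m by lia.
have -> : m + m * d = m * d.+1 by rewrite mulnS addnC.
have dle : d <= size s by rewrite /d; lia.
have d0 : 0 < d by rewrite /d; lia.
rewrite !hQ; first by rewrite pm (negbTE (not_prime_mul pm d0)).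
all: rewrite /L; nia.
Qed.

Theorem proposition3p1 :
  asym_automatic 2 f_prime_lead /\
  ~ (exists g : nat -> nat,
       (forall n, g n < 2) /\ automatic 2 g /\ asym_eq f_prime_lead g).
Proof. split; [exact: part1 | exact: part2]. Qed.
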